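(* Let $D$ be an integral domain, $\star$ a semistar operation on $D$, and $n$ a nonnegative integer. The following are equivalent: (1) every $(\star,d_T)$-linked overring $T$ of $D$ has Krull dimension at most $n$; (2) every $\widetilde{\star}$-valuation overring of $D$ has Krull dimension at most $n$.
   Context: $D$ is an integral domain with quotient field $K$; $f(D)$ denotes nonzero finitely generated fractional ideals, $\overline{\mathcal F}(D)$ nonzero $D$-submodules of $K$. A semistar operation $\star$ on $D$ is a map $\overline{\mathcal F}(D)\to\overline{\mathcal F}(D)$ with $(xE)^\star=xE^\star$ ($0\neq x\in K$), $E\subseteq F\Rightarrow E^\star\subseteq F^\star$, $E\subseteq E^\star=(E^\star)^\star$. $E^{\star_f}:=\bigcup\{F^\star:F\in f(D),F\subseteq E\}$. A nonzero ideal $I$ is a quasi-$\star_f$-ideal if $I^{\star_f}\cap D=I$; $\operatorname{QMax}^{\star_f}(D)$ is the set of maximal proper quasi-$\star_f$-ideals. $E^{\widetilde\star}:=\bigcap\{ED_M:M\in\operatorname{QMax}^{\star_f}(D)\}$ ($=K$ if empty). A valuation overring $V$ of $D$ is a $\widetilde\star$-valuation overring if $F^{\widetilde\star}\subseteq FV$ for all $F\in f(D)$. An overring $T$ of $D$ ($D\subseteq T\subseteq K$) is $(\star,d_T)$-linked to $D$ if for every nonzero finitely generated ideal $F$ of $D$ with $F^\star=D^\star$ one has $FT=T$. *)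

(* Defs.v *)
(* D is represented as a subring of its quotient field K;
   subsets of K are predicates K -> Prop (equality of sets = Leibniz equality,
   usable via functional/propositional extensionality). *)
From HB Require Import structures.
From mathcomp Require Import all_boot all_order all_algebra.
Set Implicit Arguments. Unset Strict Implicit. Unset Printing Implicit Defensive.
Import GRing.Theory.
Local Open Scope ring_scope.

Section Defs.
Variable K : fieldType.

Definition incl (A B : K -> Prop) := forall x, A x -> B x.

Definition strict_incl (A B : K -> Prop) := incl A B /\ exists x, B x /\ ~ A x.

Definition is_subring (A : K -> Prop) :=
  [/\ A 0, A 1, (forall x y, A x -> A y -> A (x - y))
   & (forall x y, A x -> A y -> A (x * y))].

Definition is_quotient_field_of (D : K -> Prop) :=
  forall x : K, exists a b, [/\ D a, D b, b != 0 & x = a / b].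

Definition is_submodule (D E : K -> Prop) :=
  [/\ E 0, (forall x y, E x -> E y -> E (x + y))
   & (forall d x, D d -> E x -> E (d * x))].

Definition nz_submodule (D E : K -> Prop) :=
  is_submodule D E /\ exists x, E x /\ x != 0.

Definition span (D : K -> Prop) (s : seq K) : K -> Prop :=
  fun x => exists c : nat -> K,
    (forall i, D (c i)) /\ x = \sum_(i < size s) c i * s`_i.

Definition fg_frac (D F : K -> Prop) :=
  nz_submodule D F /\ exists s : seq K, F = span D s.

Definition scale (x : K) (E : K -> Prop) : K -> Prop :=
  fun y => exists e, E e /\ y = x * e.

Definition semistar (D : K -> Prop) (star : (K -> Prop) -> (K -> Prop)) :=
  [/\ (forall E, nz_submodule D E -> nz_submodule D (star E)),
      (forall x E, x != 0 -> nz_submodule D E -> star (scale x E) = scale x (star E)),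
      (forall E F, nz_submodule D E -> nz_submodule D F -> incl E F ->
                   incl (star E) (star F)),
      (forall E, nz_submodule D E -> incl E (star E))
    & (forall E, nz_submodule D E -> star (star E) = star E)].

Definition star_f (D : K -> Prop) (star : (K -> Prop) -> (K -> Prop))
  (E : K -> Prop) : K -> Prop :=
  fun y => exists F, [/\ fg_frac D F, incl F E & star F y].

Definition nz_ideal (D I : K -> Prop) := nz_submodule D I /\ incl I D.

Definition quasi_ideal (D : K -> Prop) (star : (K -> Prop) -> (K -> Prop)) (I : K -> Prop) :=
  nz_ideal D I /\ (forall x, (star_f D star I x /\ D x) <-> I x).

Definition proper_quasi_ideal (D : K -> Prop) (star : (K -> Prop) -> (K -> Prop)) (I : K -> Prop) :=
  quasi_ideal D star I /\ exists x, D x /\ ~ I x.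

Definition QMax (D : K -> Prop) (star : (K -> Prop) -> (K -> Prop)) (M : K -> Prop) :=
  proper_quasi_ideal D star M /\
  (forall J, proper_quasi_ideal D star J -> incl M J -> J = M).

Definition loc (D E M : K -> Prop) : K -> Prop :=
  fun y => exists e s, [/\ E e, D s, ~ M s & y = e / s].

(* E^{tilde star} (= K if QMax is empty) *)
Definition tilde (D : K -> Prop) (star : (K -> Prop) -> (K -> Prop)) (E : K -> Prop) : K -> Prop :=
  fun y => forall M, QMax D star M -> loc D E M y.

Definition prodmod (A B : K -> Prop) : K -> Prop :=
  fun x => exists s : seq (K * K),
    (forall p, p \in s -> A p.1 /\ B p.2) /\ x = \sum_(p <- s) p.1 * p.2.

Definition overring (D T : K -> Prop) := is_subring T /\ incl D T.

Definition valuation_overring (D V : K -> Prop) :=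
  overring D V /\ (forall x : K, x != 0 -> V x \/ V x^-1).

Definition tilde_valuation_overring (D : K -> Prop) (star : (K -> Prop) -> (K -> Prop)) (V : K -> Prop) :=
  valuation_overring D V /\
  (forall F, fg_frac D F -> incl (tilde D star F) (prodmod F V)).

Definition linked_overring (D : K -> Prop) (star : (K -> Prop) -> (K -> Prop)) (T : K -> Prop) :=
  overring D T /\
  (forall F, fg_frac D F -> incl F D -> star F = star D -> prodmod F T = T).

Definition prime_ideal (T P : K -> Prop) :=
  [/\ incl P T, P 0, (forall x y, P x -> P y -> P (x + y)),
      (forall t x, T t -> P x -> P (t * x))
    & ~ P 1 /\ (forall a b, T a -> T b -> P (a * b) -> P a \/ P b)].

Definition krull_dim_le (T : K -> Prop) (n : nat) :=
  ~ exists c : nat -> (K -> Prop),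
      (forall i, (i <= n.+1)%N -> prime_ideal T (c i)) /\
      (forall i, (i <= n)%N -> strict_incl (c i) (c i.+1)).

End Defs.

(* Main.v *)
Require Import Defs.
From HB Require Import structures.
From mathcomp Require Import all_boot all_order all_algebra.
From Stdlib Require Import Classical ClassicalEpsilon FunctionalExtensionality PropExtensionality.
Set Implicit Arguments. Unset Strict Implicit. Unset Printing Implicit Defensive.
Import GRing.Theory.
Local Open Scope ring_scope.

Lemma sr0 (K : fieldType) (A : K -> Prop) : is_subring A -> A 0.
Proof. by case. Qed.
Lemma sr1 (K : fieldType) (A : K -> Prop) : is_subring A -> A 1.
Proof. by case. Qed.
Lemma srB (K : fieldType) (A : K -> Prop) x y : is_subring A -> A x -> A y -> A (x - y).
Proof. by case=> _ _ H _; apply: H. Qed.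
Lemma srM (K : fieldType) (A : K -> Prop) x y : is_subring A -> A x -> A y -> A (x * y).
Proof. by case=> _ _ _ H; apply: H. Qed.
Lemma srN (K : fieldType) (A : K -> Prop) x : is_subring A -> A x -> A (- x).
Proof. move=> h hx; rewrite -sub0r; apply: srB => //; exact: sr0. Qed.
Lemma srD (K : fieldType) (A : K -> Prop) x y : is_subring A -> A x -> A y -> A (x + y).
Proof. move=> h hx hy; rewrite -[y]opprK; apply: srB => //; exact: srN. Qed.
Lemma srX (K : fieldType) (A : K -> Prop) x n : is_subring A -> A x -> A (x ^+ n).
Proof. move=> h hx; elim: n => [|n IH]; first by rewrite expr0; apply: sr1.
  by rewrite exprS; apply: srM. Qed.
Lemma srsum (K : fieldType) (A : K -> Prop) n (F : 'I_n -> K) :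
  is_subring A -> (forall i, A (F i)) -> A (\sum_(i < n) F i).
Proof. move=> h hF; apply: (big_ind A) => //; [exact: sr0| move=> x y; exact: srD]. Qed.

Lemma setE (K : Type) (A B : K -> Prop) : (forall x, A x <-> B x) -> A = B.
Proof. move=> H; apply: functional_extensionality => x;
  apply: propositional_extensionality; exact: H. Qed.

Lemma pm_nil (K : fieldType) (X Y : K -> Prop) : prodmod X Y 0.
Proof. by exists [::]; split => //; rewrite big_nil. Qed.
Lemma pm_gen (K : fieldType) (X Y : K -> Prop) x y : X x -> Y y -> prodmod X Y (x * y).
Proof. move=> hx hy; exists [:: (x, y)]; split; last by rewrite big_seq1.
  by move=> p; rewrite inE => /eqP ->. Qed.
Lemma pm_add (K : fieldType) (X Y : K -> Prop) a b :
  prodmod X Y a -> prodmod X Y b -> prodmod X Y (a + b).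
Proof. move=> [s [hs ->]] [t [ht ->]]; exists (s ++ t); split; last by rewrite big_cat.
  by move=> p; rewrite mem_cat => /orP [] ?; [apply: hs|apply: ht]. Qed.
Lemma pm_mulr (K : fieldType) (X Y : K -> Prop) a r :
  (forall y, Y y -> Y (y * r)) -> prodmod X Y a -> prodmod X Y (a * r).
Proof. move=> hY [s [hs ->]]; exists [seq (p.1, p.2 * r) | p <- s]; split.
  - by move=> p /mapP [q hq ->] /=; case: (hs q hq) => h1 h2; split => //; apply: hY.
  - by rewrite big_map mulr_suml; apply: eq_bigr => p _ /=; rewrite mulrA. Qed.
Lemma pm_mono (K : fieldType) (X Y X' Y' : K -> Prop) a :
  incl X X' -> incl Y Y' -> prodmod X Y a -> prodmod X' Y' a.
Proof. move=> h1 h2 [s [hs ->]]; exists s; split => // p hp; case: (hs p hp); split; auto. Qed.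
Lemma pm_in (K : fieldType) (X Y Z : K -> Prop) a :
  Z 0 -> (forall x y, Z x -> Z y -> Z (x + y)) -> (forall x y, X x -> Y y -> Z (x * y)) ->
  prodmod X Y a -> Z a.
Proof. move=> h0 hD hM [s [hs ->]]; elim: s hs => [|p s IH] hs; first by rewrite big_nil.
  rewrite big_cons; apply: hD; last by apply: IH => q hq; apply: hs; rewrite inE hq orbT.
  by case: (hs p (mem_head _ _)); apply: hM. Qed.
Definition isval (K : fieldType) (V : K -> Prop) :=
  is_subring V /\ forall x : K, x != 0 -> V x \/ V x^-1.
Definition mx (K : fieldType) (V : K -> Prop) (x : K) := V x /\ (x = 0 \/ ~ V x^-1).

Lemma mx0 (K : fieldType) (V : K -> Prop) : is_subring V -> mx V 0.
Proof. by move=> h; split; [apply: sr0|left]. Qed.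
Lemma mx1 (K : fieldType) (V : K -> Prop) : is_subring V -> ~ mx V 1.
Proof. move=> h [_ [/eqP|]]; first by rewrite oner_eq0.
  by rewrite invr1; apply; apply: sr1. Qed.
Lemma mxM (K : fieldType) (V : K -> Prop) a b : is_subring V -> V a -> mx V b -> mx V (a * b).
Proof. move=> h ha [hb hb']; split; first exact: srM.
  have [->|ab0] := eqVneq (a * b) 0; [by left|right].
  move: ab0; rewrite mulf_eq0 negb_or => /andP [a0 b0] Hi.
  case: hb' => [/eqP|]; first by rewrite (negbTE b0).
  apply; have -> : b^-1 = a * (a * b)^-1 by rewrite invfM mulrA mulrV ?unitfE // mul1r.
  exact: srM. Qed.
Lemma mxMr (K : fieldType) (V : K -> Prop) a b : is_subring V -> mx V a -> V b -> mx V (a * b).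
Proof. by move=> h ha hb; rewrite mulrC; apply: mxM. Qed.
Lemma mxN (K : fieldType) (V : K -> Prop) a : is_subring V -> mx V a -> mx V (- a).
Proof. move=> h ha; rewrite -mulN1r; apply: mxM => //; apply: srN => //; exact: sr1. Qed.
Lemma mxB (K : fieldType) (V : K -> Prop) a b : isval V -> mx V a -> mx V b -> mx V (a - b).
Proof. move=> [h hv] ha hb.
  have [->|a0] := eqVneq a 0; first by rewrite sub0r; apply: mxN.
  have [->|b0] := eqVneq b 0; first by rewrite subr0.
  have ab0 : a / b != 0 by rewrite mulf_neq0 // invr_eq0.
  case: (hv _ ab0) => H.
  - have -> : a - b = (a / b - 1) * b by rewrite mulrBl -mulrA mulVf // mulr1 mul1r.
    apply: mxM => //; apply: srB => //; exact: sr1.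
  - move: H; rewrite invfM invrK => H.
    have -> : a - b = a * (1 - b / a) by rewrite mulrBr mulr1 mulrCA mulfV // mulr1.
    apply: mxMr => //; apply: srB => //; [exact: sr1|by rewrite mulrC].
Qed.
Lemma mxD (K : fieldType) (V : K -> Prop) a b : isval V -> mx V a -> mx V b -> mx V (a + b).
Proof. move=> h ha hb; rewrite -[b]opprK; apply: mxB => //; apply: mxN => //; by case: h. Qed.
Lemma mx_prime (K : fieldType) (V : K -> Prop) a b : is_subring V -> V a -> V b ->
  mx V (a * b) -> mx V a \/ mx V b.
Proof. move=> h ha hb [_ H].
  apply: NNPP => Hn.
  have na : ~ mx V a by move=> ?; apply: Hn; left.
  have nb : ~ mx V b by move=> ?; apply: Hn; right.
  have a0 : a != 0 by apply/eqP => a0; apply: na; rewrite a0; exact: mx0.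
  have b0 : b != 0 by apply/eqP => b0; apply: nb; rewrite b0; exact: mx0.
  have ia : V a^-1 by apply: NNPP => H'; apply: na; split => //; right.
  have ib : V b^-1 by apply: NNPP => H'; apply: nb; split => //; right.
  case: H => [/eqP|]; first by rewrite mulf_eq0 (negbTE a0) (negbTE b0).
  by apply; rewrite invfM; apply: srM.
Qed.
Lemma mx_unit (K : fieldType) (V : K -> Prop) x : V x -> ~ mx V x -> x != 0 /\ V x^-1.
Proof. move=> hx hn; split.
  - by apply/eqP => x0; apply: hn; split => //; left.
  - by apply: NNPP => H; apply: hn; split => //; right. Qed.
Lemma mx_prime_ideal (K : fieldType) (V : K -> Prop) : isval V -> prime_ideal V (mx V).
Proof. move=> hV; have h := proj1 hV; split.
  - by move=> x [].
  - exact: mx0.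
  - by move=> x y; apply: mxD.
  - by move=> t x ht hx; apply: mxM.
  - split; first exact: mx1. by move=> a b ha hb; apply: mx_prime. Qed.

Lemma val_notin (K : fieldType) (V : K -> Prop) x : isval V -> ~ V x -> mx V x^-1.
Proof. move=> [h hv] hx.
  have x0 : x != 0 by apply/eqP => x0; apply: hx; rewrite x0; exact: sr0.
  case: (hv _ x0) => // H; split => //; right; by rewrite invrK. Qed.

Lemma pm_one (K : fieldType) (F S : K -> Prop) :
  is_subring S -> incl F S -> prodmod F S 1 -> prodmod F S = S.
Proof. move=> hS hF h1; apply: setE => x; split.
  - apply: pm_in; [exact: sr0| move=> a b; exact: srD| move=> a b ha hb; apply: srM => //; exact: hF].
  - by move=> hx; rewrite -[x]mul1r; apply: pm_mulr h1 => y hy; apply: srM. Qed.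
Definition sincl {T : Type} (A B : T -> Prop) := forall x, A x -> B x.
Definition chainP {T : Type} (C : (T -> Prop) -> Prop) :=
  forall X Y, C X -> C Y -> sincl X Y \/ sincl Y X.
Definition bigU {T : Type} (C : (T -> Prop) -> Prop) : T -> Prop :=
  fun x => exists X, C X /\ X x.

Lemma set_ext {T : Type} (A B : T -> Prop) : sincl A B -> sincl B A -> A = B.
Proof.
  intros H1 H2; apply functional_extensionality; intro x;
  apply propositional_extensionality; split; auto.
Qed.

Inductive tower {T : Type} (g : (T -> Prop) -> (T -> Prop)) (X0 : T -> Prop) :
  (T -> Prop) -> Prop :=
| tw0 : tower g X0 X0
| twg X : tower g X0 X -> tower g X0 (g X)
| twu (C : (T -> Prop) -> Prop) : (forall X, C X -> tower g X0 X) ->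
    (exists X, C X) -> chainP C -> tower g X0 (bigU C).

Lemma zorn {T : Type} (F : (T -> Prop) -> Prop) :
  (exists X, F X) ->
  (forall C, (exists X, C X) -> (forall X, C X -> F X) -> chainP C -> F (bigU C)) ->
  exists M, F M /\ forall X, F X -> sincl M X -> sincl X M.
Proof.
  intros [X0 HX0] Hch.
  apply NNPP; intro Hno.
  assert (Hg : forall M, F M -> exists X, F X /\ sincl M X /\ ~ sincl X M).
  { intros M HM. apply NNPP; intro H. apply Hno. exists M. split; auto.
    intros X HX HMX. apply NNPP; intro H'. apply H. exists X. auto. }
  set (g := fun M => epsilon (inhabits M)
                       (fun X => F M -> F X /\ sincl M X /\ ~ sincl X M)).
  assert (Hgs : forall M, F M -> F (g M) /\ sincl M (g M) /\ ~ sincl (g M) M).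
  { intros M HM. unfold g. apply (epsilon_spec (inhabits M)
      (fun X => F M -> F X /\ sincl M X /\ ~ sincl X M)); auto.
    destruct (Hg M HM) as [X HX]. exists X. auto. }
  assert (HF : forall X, tower g X0 X -> F X).
  { intros X H; induction H; auto. apply Hgs; auto. }
  assert (Hinc : forall X, tower g X0 X -> sincl X (g X)).
  { intros X H. apply Hgs. auto. }
  assert (Hmin : forall X, tower g X0 X -> sincl X0 X).
  { intros X H; induction H.
    - intros x h; exact h.
    - intros x h. apply (Hinc X H). auto.
    - destruct H1 as [Y HY]. intros x h. exists Y. split; auto. apply H0; auto. }
  set (extreme := fun c => forall x, tower g X0 x -> sincl x c ->
                          sincl c x \/ sincl (g x) c).
  assert (HA : forall c, tower g X0 c -> extreme c ->
            forall x, tower g X0 x -> sincl x c \/ sincl (g c) x).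
  { intros c Hc Hext x Hx. induction Hx.
    - left. apply Hmin; auto.
    - destruct IHHx as [H1|H1].
      + destruct (Hext X Hx H1) as [H2|H2].
        * assert (E : X = c) by (apply set_ext; auto). subst X.
          right. intros y hy; exact hy.
        * left; auto.
      + right. intros y hy. apply (Hinc X Hx). auto.
    - destruct (classic (forall X, C X -> sincl X c)) as [Hall|Hnall].
      + left. intros y [X [HX hy]]. eapply Hall; eauto.
      + right. apply not_all_ex_not in Hnall. destruct Hnall as [X HX].
        assert (CX : C X) by (apply NNPP; intro; apply HX; intro; contradiction).
        assert (nXc : ~ sincl X c) by (intro; apply HX; auto).
        destruct (H0 X CX) as [h|h]; [contradiction|].
        intros y hy. exists X. split; auto. }
  assert (HB : forall c, tower g X0 c -> extreme c).
  { intros c Hc. induction Hc.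
    - intros x Hx Hxc. left. apply Hmin; auto.
    - intros x Hx Hxc. destruct (HA X Hc IHHc x Hx) as [H1|H1].
      + destruct (IHHc x Hx H1) as [H2|H2].
        * assert (E : X = x) by (apply set_ext; auto). subst X.
          right. intros y hy; exact hy.
        * right. intros y hy. apply (Hinc X Hc). auto.
      + left. auto.
    - rename H1 into Hne; rename H2 into Hcc. intros x Hx Hxc.
      destruct (classic (forall X, C X -> sincl (g X) x)) as [Hall|Hnall].
      + left. intros y [X [HX hy]]. apply (Hall X HX). apply (Hinc X (H X HX)). auto.
      + apply not_all_ex_not in Hnall. destruct Hnall as [X HX].
        assert (CX : C X) by (apply NNPP; intro; apply HX; intro; contradiction).
        assert (nX : ~ sincl (g X) x) by (intro; apply HX; auto).
        destruct (HA X (H X CX) (H0 X CX) x Hx) as [H1|H1]; [|contradiction].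
        destruct (H0 X CX x Hx H1) as [H2|H2].
        *
          assert (E : X = x) by (apply set_ext; auto). subst X.
          destruct (classic (forall Y, C Y -> sincl Y x)) as [Hall2|Hn2].
          -- left. intros y [Y [HY hy]]. eapply Hall2; eauto.
          -- right. apply not_all_ex_not in Hn2. destruct Hn2 as [Y HY].
             assert (CY : C Y) by (apply NNPP; intro; apply HY; intro; contradiction).
             assert (nY : ~ sincl Y x) by (intro; apply HY; auto).
             destruct (HA x Hx (H0 x CX) Y (H Y CY)) as [h|h]; [contradiction|].
             intros y hy. exists Y. split; auto.
        * right. intros y hy. exists X. split; auto. }
  set (U := bigU (tower g X0)).
  assert (HU : tower g X0 U).
  { apply twu; auto. exists X0; constructor.
    intros X Y HX HY. destruct (HA Y HY (HB Y HY) X HX) as [h|h]; auto.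
    right. intros y hy. apply h. apply (Hinc Y HY). auto. }
  destruct (Hgs U (HF U HU)) as [_ [_ Hn]]. apply Hn.
  intros y hy. exists (g U). split; auto. apply twg; auto.
Qed.
Definition adj (K : fieldType) (R : K -> Prop) (z : K) : K -> Prop :=
  fun x => exists p : {poly K}, (forall i, R p`_i) /\ x = p.[z].

Lemma adj_sub (K : fieldType) (R : K -> Prop) z : is_subring R -> is_subring (adj R z).
Proof. move=> h; split.
  - exists 0; split; last by rewrite horner0. by move=> i; rewrite coef0; apply: sr0.
  - exists 1; split; last by rewrite hornerC. move=> i; rewrite coef1.
    by case: (i == 0%N); [apply: sr1|apply: sr0].
  - move=> x y [p [hp ->]] [q [hq ->]]; exists (p - q); split; last by rewrite hornerD hornerN.
    by move=> i; rewrite coefB; apply: srB.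
  - move=> x y [p [hp ->]] [q [hq ->]]; exists (p * q); split; last by rewrite hornerM.
    by move=> i; rewrite coefM; apply: srsum => // j; apply: srM.
Qed.
Lemma adj_R (K : fieldType) (R : K -> Prop) z x : is_subring R -> R x -> adj R z x.
Proof. move=> h hx; exists x%:P; split; last by rewrite hornerC.
  by move=> i; rewrite coefC; case: (i == 0%N) => //; apply: sr0. Qed.
Lemma adj_z (K : fieldType) (R : K -> Prop) z : is_subring R -> adj R z z.
Proof. move=> h; exists 'X; split; last by rewrite hornerX.
  by move=> i; rewrite coefX; case: (i == 1%N); [apply: sr1|apply: sr0]. Qed.
Lemma adj_in (K : fieldType) (R S : K -> Prop) z :
  is_subring S -> incl R S -> S z -> incl (adj R z) S.
Proof. move=> hS hRS hz x [p [hp ->]]; rewrite horner_coef; apply: srsum => // i.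
  apply: srM => //; [exact: hRS| exact: srX]. Qed.
Lemma adj_J (K : fieldType) (N R : K -> Prop) z a :
  prodmod N (adj R z) a -> exists Q : {poly K}, (forall i, prodmod N R Q`_i) /\ a = Q.[z].
Proof. move=> [s [hs ->]]; elim: s hs => [|p s IH] hs.
  - exists 0; split; last by rewrite big_nil horner0. by move=> i; rewrite coef0; exact: pm_nil.
  - have [Q [hQ eQ]] : exists Q : {poly K}, (forall i, prodmod N R Q`_i) /\
       \sum_(q <- s) q.1 * q.2 = Q.[z] by apply: IH => q hq; apply: hs; rewrite inE hq orbT.
    case: (hs p (mem_head _ _)) => hp1 [r [hr hr2]].
    exists (p.1 *: r + Q); split; last by rewrite big_cons hornerD hornerZ hr2 eQ.
    by move=> i; rewrite coefD coefZ; apply: pm_add => //; apply: pm_gen.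
Qed.
From Stdlib Require Import Lia.
Definition NP (K : fieldType) (P V : K -> Prop) (x : K) := P x \/ mx V x.
Definition fam (K : fieldType) (V A P R : K -> Prop) :=
  [/\ is_subring R, incl A R, incl (mx V) R, incl R V &
      forall a, A a -> prodmod (NP P V) R a -> P a].
Definition ctx (K : fieldType) (V A P : K -> Prop) :=
  [/\ isval V, is_subring A, incl A V, prime_ideal A P &
      forall a, A a -> mx V a -> P a].

Lemma J_R (K : fieldType) (V A P R : K -> Prop) : ctx V A P -> fam V A P R ->
  incl (prodmod (NP P V) R) R.
Proof. move=> [hV hA hAV [hPA _ _ _ _] _] [hR hAR hmR _ _] x.
  apply: pm_in; [exact: sr0| move=> a b; exact: srD|].
  move=> a b [ha|ha] hb; apply: srM => //; [apply: hAR; exact: hPA| exact: hmR]. Qed.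
Lemma J_M (K : fieldType) (V A P R : K -> Prop) a r : fam V A P R ->
  prodmod (NP P V) R a -> R r -> prodmod (NP P V) R (a * r).
Proof. move=> [hR _ _ _ _] ha hr; apply: pm_mulr ha => y hy; exact: srM. Qed.
Lemma J_B (K : fieldType) (V A P R : K -> Prop) a b : fam V A P R ->
  prodmod (NP P V) R a -> prodmod (NP P V) R b -> prodmod (NP P V) R (a - b).
Proof. move=> hf ha hb; apply: pm_add => //; rewrite -mulrN1; apply: (J_M hf) => //.
  case: hf => hR _ _ _ _; apply: srN => //; exact: sr1. Qed.
Lemma J_N (K : fieldType) (V A P R : K -> Prop) a : fam V A P R -> NP P V a ->
  prodmod (NP P V) R a.
Proof. move=> [hR _ _ _ _] ha; rewrite -[a]mulr1; apply: pm_gen => //; exact: sr1. Qed.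

Lemma fam_adj (K : fieldType) (V A P R : K -> Prop) z : ctx V A P -> fam V A P R -> V z ->
  (forall Q : {poly K}, (forall i, prodmod (NP P V) R Q`_i) -> A Q.[z] -> P Q.[z]) ->
  fam V A P (adj R z).
Proof. move=> [[hV _] _ _ _ _] [hR hAR hmR hRV _] hz H; split.
  - exact: adj_sub.
  - by move=> x hx; apply: adj_R => //; apply: hAR.
  - by move=> x hx; apply: adj_R => //; apply: hmR.
  - exact: adj_in.
  - by move=> a ha /adj_J [Q [hQ ea]]; subst a; apply: H. Qed.

Definition isMax (K : fieldType) (V A P R : K -> Prop) :=
  fam V A P R /\ forall X, fam V A P X -> incl R X -> incl X R.

Lemma max_adj (K : fieldType) (V A P R : K -> Prop) z : ctx V A P -> isMax V A P R -> V z ->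
  (forall Q : {poly K}, (forall i, prodmod (NP P V) R Q`_i) -> A Q.[z] -> P Q.[z]) -> R z.
Proof. move=> hc [hf hm] hz H. have hf' := fam_adj hc hf hz H.
  apply: (hm _ hf'); first by move=> x hx; apply: adj_R => //; case: hf.
  apply: adj_z; by case: hf. Qed.

Lemma inv_sum (K : fieldType) (R Z : K -> Prop) (Q : {poly K}) u d :
  is_subring R -> Z 0 -> (forall x y, Z x -> Z y -> Z (x + y)) ->
  (forall x r, Z x -> R r -> Z (x * r)) -> R u -> u != 0 ->
  (forall i, Z Q`_i) -> (size Q <= d)%N -> Z (Q.[u^-1] * u ^+ d).
Proof. move=> hR h0 hD hM hu u0 hQ hs.
  rewrite (horner_coef_wide _ hs) mulr_suml; apply: (big_ind Z) => // i _.
  have hi : (i <= d)%N by apply: ltnW.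
  have -> : Q`_i * u^-1 ^+ i * u ^+ d = Q`_i * u ^+ (d - i).
    rewrite -mulrA; congr (_ * _); rewrite -{2}(subnK hi) exprD exprVn mulrCA mulVf ?mulr1 //.
    by rewrite expf_neq0.
  apply: hM => //; exact: srX. Qed.

Lemma prime_pow (K : fieldType) (A P : K -> Prop) a n : is_subring A -> prime_ideal A P ->
  A a -> P (a ^+ n) -> P a.
Proof. move=> hA [_ _ _ _ [h1 hpr]] ha; elim: n => [|n IH]; first by rewrite expr0.
  rewrite exprS => H; case: (hpr _ _ ha (srX _ hA ha) H) => //. Qed.
Lemma unitA (K : fieldType) (V A P R : K -> Prop) a : ctx V A P -> isMax V A P R ->
  A a -> ~ P a -> R a^-1 /\ a != 0.
Proof. move=> hc hM ha hna; have hc' := hc; case: hc' => hV hA hAV hP hAP.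
  have hf := proj1 hM; have hf' := hf; case: hf' => hR hAR hmR hRV hJP.
  have [a0 ia] : a != 0 /\ V a^-1.
    apply: mx_unit; first exact: hAV. by move=> h; apply: hna; apply: hAP.
  split => //; apply: (max_adj hc hM ia) => Q hQ hq; apply: NNPP => hn.
  have hJ := @inv_sum K R (prodmod (NP P V) R) Q a (size Q) hR (pm_nil _ _)
     (fun x y => @pm_add K _ _ x y) (fun x r hx hr => J_M hf hx hr) (hAR _ ha) a0 hQ (leqnn _).
  have hPp := hJP _ (srM hA hq (srX _ hA ha)) hJ.
  have hP' := hP; case: hP' => _ _ _ _ [_ hpr].
  case: (hpr _ _ hq (srX _ hA ha) hPp) => // /(prime_pow hA hP ha). exact. Qed.

Lemma powJ (K : fieldType) (V A P R : K -> Prop) b n : fam V A P R ->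
  prodmod (NP P V) R b -> R b -> prodmod (NP P V) R ((1 - b) ^+ n - 1).
Proof. move=> hf hb hbR; have hR : is_subring R by case: hf.
  elim: n => [|n IH]; first by rewrite expr0 subrr; apply: pm_nil.
  have -> : (1 - b) ^+ n.+1 - 1 = ((1 - b) ^+ n - 1) * (1 - b) + (0 - b).
    have e : forall u : K, u ^+ n.+1 - 1 = (u ^+ n - 1) * u + (u - 1).
      by move=> u; rewrite mulrBl mul1r addrA subrK exprSr.
    by rewrite e addrAC subrr.
  apply: pm_add; first apply: (J_M hf IH); first by apply: srB => //; exact: sr1.
  apply: (J_B hf) => //; exact: pm_nil. Qed.

Lemma unitJ (K : fieldType) (V A P R : K -> Prop) b : ctx V A P -> isMax V A P R ->
  prodmod (NP P V) R b -> R (1 - b)^-1 /\ 1 - b != 0.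
Proof. move=> hc hM hb; have hc' := hc; case: hc' => hV hA hAV hP hAP.
  have hf := proj1 hM; have hf' := hf; case: hf' => hR hAR hmR hRV hJP.
  have hbR : R b by apply: (J_R hc hf).
  have huR : R (1 - b) by apply: srB => //; exact: sr1.
  have [u0 iu] : 1 - b != 0 /\ V (1 - b)^-1.
    apply: mx_unit; first exact: hRV. move=> h.
    have : prodmod (NP P V) R (1 - b + b) by apply: pm_add => //; apply: (J_N hf); right.
    rewrite subrK => /(hJP _ (sr1 hA)). by case: hP => _ _ _ _ [].
  split => //; apply: (max_adj hc hM iu) => Q hQ hq; apply: NNPP => hn.
  have hJ := @inv_sum K R (prodmod (NP P V) R) Q (1 - b) (size Q) hR (pm_nil _ _)
     (fun x y => @pm_add K _ _ x y) (fun x r hx hr => J_M hf hx hr) huR u0 hQ (leqnn _).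
  have hqR : R Q.[(1 - b)^-1] by apply: hAR.
  have hJ2 := J_M hf (powJ (size Q) hf hb hbR) hqR.
  have := J_B hf hJ hJ2.
  set c := Q.[(1 - b)^-1]; set w := (1 - b) ^+ size Q.
  have -> : c * w - (w - 1) * c = c by rewrite mulrBl mul1r [w * c]mulrC opprB addrC subrK.
  by move/(hJP _ hq). Qed.
Definition Rep (K : fieldType) (Z : K -> Prop) (z : K) (k : nat) :=
  exists Q : {poly K}, (size Q <= k)%N /\ (forall i, Z Q`_i) /\ Q.[z] = 1.

Lemma reduce (K : fieldType) (R Z : K -> Prop) z k' l' :
  is_subring R -> incl Z R -> Z 0 -> (forall x y, Z x -> Z y -> Z (x - y)) ->
  (forall x r, Z x -> R r -> Z (x * r)) ->
  (forall b, Z b -> R (1 - b)^-1 /\ 1 - b != 0) ->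
  z != 0 -> Rep Z z k'.+1 -> Rep Z z^-1 l'.+1 -> (l' <= k')%N -> Rep Z z k'.
Proof.
  move=> hR hZR hZ0 hZB hZM hU z0 [Q1 [s1 [c1 e1]]] [Q2 [s2 [c2 e2]]] hlk.
  set G : {poly K} := 'X^l' - \sum_(i < l'.+1) Q2`_i *: 'X^(l' - i).
  have G1 : G.[z] = 0.
    rewrite /G hornerD hornerN horner_sum hornerXn.
    have -> : \sum_(i < l'.+1) (Q2`_i *: 'X^(l' - i)).[z] = z ^+ l' * Q2.[z^-1].
      rewrite (horner_coef_wide _ s2) mulr_sumr; apply: eq_bigr => i _.
      rewrite hornerZ hornerXn mulrCA; congr (_ * _).
      have hi : (i <= l')%N by rewrite -ltnS.
      have ex : forall m, (m <= l')%N -> z^+(l'-m) = z^+l' * z^-1^+m.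
        move=> m hm; by rewrite exprVn -{2}(subnK hm) exprD mulrK // unitfE expf_neq0.
      exact: ex.
    by rewrite e2 mulr1 subrr.
  have G2 : forall j, R G`_j.
    move=> j; rewrite /G coefB coefXn coef_sum; apply: srB => //.
      by case: (j == l'); [apply: sr1|apply: sr0].
    apply: srsum => // i; rewrite coefZ coefXn; apply: srM => //; first by apply: hZR.
    by case: (j == _); [apply: sr1|apply: sr0].
  have G3 : G`_l' = 1 - Q2`_0.
    rewrite /G coefB coefXn eqxx coef_sum big_ord_recl /= coefZ coefXn subn0 eqxx mulr1.
    rewrite big1 ?addr0 // => i _; rewrite coefZ coefXn /=.
    have : (l' - (bump 0 i) < l')%N.
      have hi := ltn_ord i. rewrite /bump /= add1n. apply/ltP; move/ltP: hi.
      rewrite -!minusE. lia.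
    by rewrite ltn_neqAle => /andP [/negbTE]; rewrite eq_sym => -> _; rewrite mulr0.
  have G4 : forall j, (l' < j)%N -> G`_j = 0.
    move=> j hj; rewrite /G coefB coefXn coef_sum.
    have -> : (j == l') = false by apply/negbTE; rewrite neq_ltn hj orbT.
    rewrite big1 ?subr0 // => i _; rewrite coefZ coefXn.
    have -> : (j == (l' - i)%N) = false.
      apply/negbTE; rewrite neq_ltn; apply/orP; right; apply: leq_ltn_trans hj; exact: leq_subr.
    by rewrite mulr0.
  have hb := c2 0%N. case: (hU _ hb) => hui u0.
  set c := Q1`_k' * (1 - Q2`_0)^-1.
  have hc : Z c by apply: hZM => //; apply: c1.
  exists (Q1 - c *: ('X^(k' - l') * G)); split; [|split].
  - apply/leq_sizeP => j hj; rewrite coefB coefZ coefXnM.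
    have hj' : (k' - l' <= j)%N by apply: leq_trans hj; exact: leq_subr.
    rewrite ltnNge hj' /=.
    move: hj; rewrite leq_eqVlt => /orP [/eqP <-|hj].
    + have -> : (k' - (k' - l'))%N = l' by rewrite subKn.
      by rewrite G3 /c mulrVK ?unitfE // subrr.
    + have -> : Q1`_j = 0 by move/leq_sizeP: s1; apply.
      rewrite G4 ?mulr0 ?subr0 //.
      apply/ltP; move/ltP: hj; move/leP: hlk; rewrite -!minusE. lia.
  - move=> i; rewrite coefB coefZ; apply: hZB => //; apply: hZM => //.
    rewrite coefXnM; case: (i < _)%N; [exact: sr0|exact: G2].
  - by rewrite hornerD hornerN hornerZ hornerM hornerXn G1 mulr0 mulr0 subr0.
Qed.
Lemma Rep0 (K : fieldType) (Z : K -> Prop) z : ~ Rep Z z 0.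
Proof. move=> [Q [/size_poly_leq0P -> [_]]]; rewrite horner0 => /eqP; by rewrite eq_sym oner_eq0. Qed.

Lemma noboth (K : fieldType) (R Z : K -> Prop) :
  is_subring R -> incl Z R -> Z 0 -> (forall x y, Z x -> Z y -> Z (x - y)) ->
  (forall x r, Z x -> R r -> Z (x * r)) ->
  (forall b, Z b -> R (1 - b)^-1 /\ 1 - b != 0) ->
  forall n z k l, (k + l <= n)%N -> z != 0 -> Rep Z z k -> Rep Z z^-1 l -> False.
Proof.
  move=> hR hZR hZ0 hZB hZM hU; elim=> [|n IH] z k l hn z0 h1 h2.
  - move: hn; rewrite leqn0 addn_eq0 => /andP [/eqP k0 _]; subst k; exact: Rep0 h1.
  - case: k h1 hn => [|k'] h1 hn; first exact: Rep0 h1.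
    case: l h2 hn => [|l'] h2 hn; first exact: Rep0 h2.
    case: (leqP l' k') => hlk.
    + have h3 := reduce hR hZR hZ0 hZB hZM hU z0 h1 h2 hlk.
      have hn' : (k' + l'.+1 <= n)%N by move: hn; rewrite addSn ltnS.
      exact: (IH z k' l'.+1 hn' z0 h3 h2).
    + have zi0 : z^-1 != 0 by rewrite invr_eq0.
      have h1' : Rep Z (z^-1)^-1 k'.+1 by rewrite invrK.
      have h3 := reduce hR hZR hZ0 hZB hZM hU zi0 h2 h1' (ltnW hlk).
      have hn' : (l' + k'.+1 <= n)%N by move: hn; rewrite !addnS !addSn ltnS [(k' + l')%N]addnC.
      exact: (IH z^-1 l' k'.+1 hn' zi0 h3 h1').
Qed.
Lemma pm_chain (K : fieldType) (Y : K -> Prop) (C : (K -> Prop) -> Prop) a :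
  (exists X, C X) -> chainP C -> prodmod Y (bigU C) a -> exists X, C X /\ prodmod Y X a.
Proof. move=> [X0 hX0] hch [s [hs ->]]; elim: s hs => [|p s IH] hs.
  - exists X0; split => //; rewrite big_nil; exact: pm_nil.
  - have [X [hX hXs]] : exists X, C X /\ prodmod Y X (\sum_(q <- s) q.1 * q.2).
      by apply: IH => q hq; apply: hs; rewrite inE hq orbT.
    case: (hs p (mem_head _ _)) => hp1 [X1 [hX1 hp2]].
    rewrite big_cons; case: (hch _ _ hX hX1) => hsub.
    + exists X1; split => //; apply: pm_add; first exact: pm_gen.
      exact: pm_mono hXs.
    + exists X; split => //; apply: pm_add => //; apply: pm_gen => //; exact: hsub.
Qed.

Lemma fam_chain (K : fieldType) (V A P : K -> Prop) (C : (K -> Prop) -> Prop) :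
  (exists X, C X) -> (forall X, C X -> fam V A P X) -> chainP C -> fam V A P (bigU C).
Proof. move=> hne hC hch; have [X0 hX0] := hne.
  have two : forall x y, bigU C x -> bigU C y -> exists X, C X /\ X x /\ X y.
    move=> x y [X [hX hx]] [Y [hY hy]]; case: (hch _ _ hX hY) => h.
    - by exists Y; split => //; split => //; apply: h.
    - by exists X; split => //; split => //; apply: h.
  case: (hC _ hX0) => hR0 hA0 hm0 _ _; split.
  - split.
    + by exists X0; split => //; apply: sr0.
    + by exists X0; split => //; apply: sr1.
    + move=> x y hx hy; case: (two _ _ hx hy) => X [hX [h1 h2]]; exists X; split => //.
      by apply: srB => //; case: (hC _ hX).
    + move=> x y hx hy; case: (two _ _ hx hy) => X [hX [h1 h2]]; exists X; split => //.
      by apply: srM => //; case: (hC _ hX).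
  - by move=> x hx; exists X0; split => //; apply: hA0.
  - by move=> x hx; exists X0; split => //; apply: hm0.
  - by move=> x [X [hX hx]]; case: (hC _ hX) => _ _ _ h _; apply: h.
  - move=> a ha /(pm_chain hne hch) [X [hX hXa]]; by case: (hC _ hX) => _ _ _ _ h; apply: h.
Qed.

Lemma fam_base (K : fieldType) (V A P : K -> Prop) : ctx V A P ->
  exists R, fam V A P R.
Proof. move=> [hV hA hAV hP hAP]; have hVs := proj1 hV.
  have hP' := hP; case: hP' => hPA hP0 hPD hPM [hP1 hPp].
  exists (fun x => exists a mu, [/\ A a, mx V mu & x = a + mu]); split.
  - split.
    + exists 0, 0; split; [exact: sr0|exact: mx0|by rewrite addr0].
    + exists 1, 0; split; [exact: sr1|exact: mx0|by rewrite addr0].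
    + move=> x y [a [m [ha hm ->]]] [b [m' [hb hm' ->]]]; exists (a - b), (m - m'); split.
      * exact: srB. * exact: mxB. * by rewrite opprD addrACA.
    + move=> x y [a [m [ha hm ->]]] [b [m' [hb hm' ->]]].
      exists (a * b), (a * m' + m * (b + m')); split.
      * exact: srM. * apply: mxD => //; [apply: mxM => //; exact: hAV|apply: mxMr => //].
        apply: srD => //; [exact: hAV|by case: hm'].
      * by rewrite mulrDl mulrDr addrA.
  - by move=> x hx; exists x, 0; split => //; [exact: mx0|rewrite addr0].
  - by move=> x hx; exists 0, x; split => //; [exact: sr0|rewrite add0r].
  - by move=> x [a [m [ha hm ->]]]; apply: srD => //; [exact: hAV|case: hm].
  - move=> a ha hJ.
    have : exists p mu, [/\ P p, mx V mu & a = p + mu].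
      move: hJ; apply: (pm_in (Z := fun a => exists p mu, [/\ P p, mx V mu & a = p + mu])).
      + by exists 0, 0; split; [|exact: mx0|rewrite addr0].
      + move=> x y [p [m [hp hm ->]]] [q [m' [hq hm' ->]]]; exists (p + q), (m + m'); split.
        * exact: hPD. * exact: mxD. * by rewrite addrACA.
      + move=> n r [hn|hn] [b [m [hb hm ->]]].
        * exists (b * n), (n * m); split.
          -- exact: hPM. -- apply: mxM => //; apply: hAV; exact: hPA.
          -- by rewrite mulrDr mulrC.
        * exists 0, (n * (b + m)); split => //; last by rewrite add0r.
          apply: mxMr => //; apply: srD => //; [exact: hAV|by case: hm].
    move=> [p [m [hp hm ea]]].
    have hmA : A m by rewrite (_ : m = a - p); [apply: srB => //; exact: hPA|rewrite ea addrC addKr].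
    by rewrite ea; apply: hPD => //; apply: hAP.
Qed.
Lemma RC (K : fieldType) (V A P : K -> Prop) : ctx V A P ->
  exists W, [/\ isval W, incl A W, incl W V, incl (mx V) W &
                forall a, A a -> (mx W a <-> P a)].
Proof. move=> hc; have hc' := hc; case: hc' => hV hA hAV hP hAP.
  have [M [hfM hmax]] := zorn (fam_base hc) (fun C hne hC hch => fam_chain hne hC hch).
  have hM : isMax V A P M by split.
  have hf := hfM; case: hf => hR hAR hmR hRV hJP.
  set J := prodmod (NP P V) M.
  have hZ : forall z, z != 0 -> V z -> ~ M z -> exists k, Rep J z k.
    move=> z z0 hz hnz.
    have : ~ (forall Q : {poly K}, (forall i, J Q`_i) -> A Q.[z] -> P Q.[z]).
      by move=> H; apply: hnz; apply: (max_adj hc hM hz).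
    move=> /not_all_ex_not [Q] HQ.
    have [hQ HQ'] := imply_to_and _ _ HQ.
    have [hq hnq] := imply_to_and _ _ HQ'.
    case: (unitA hc hM hq hnq) => hi a0.
    exists (size (Q.[z]^-1 *: Q)), (Q.[z]^-1 *: Q); split; first exact: leqnn. split.
    - move=> i; rewrite /J coefZ mulrC; apply: (J_M hfM) => //; exact: hQ.
    - by rewrite hornerZ mulVf.
  have hval : isval M.
    split => // x x0; apply: NNPP => hn.
    have nx : ~ M x by move=> h; apply: hn; left.
    have nxi : ~ M x^-1 by move=> h; apply: hn; right.
    have vx : V x.
      apply: NNPP => h; apply: nxi; apply: hmR; exact: val_notin.
    have vxi : V x^-1.
      apply: NNPP => h; apply: nx; apply: hmR; split => //; by right.
    have [k hk] := hZ x x0 vx nx.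
    have [l hl] := hZ x^-1 (invr_neq0 x0) vxi nxi.
    apply: (@noboth K M J hR (J_R hc hfM) (pm_nil _ _) (fun x y => J_B hfM) (fun x r => J_M hfM)
       (fun b hb => unitJ hc hM hb) (k + l) x k l (leqnn _) x0 hk hl).
  exists M; split => // a ha; split.
  - move=> [hMa hor]; apply: NNPP => hna; case: (unitA hc hM ha hna) => hi a0.
    by case: hor => [/eqP|]; [rewrite (negbTE a0)|].
  - move=> hPa; split; first exact: hAR.
    have [->|a0] := eqVneq a 0; [by left|right] => hi.
    have : J (a * a^-1) by apply: (J_M hfM) => //; apply: (J_N hfM); left.
    rewrite mulfV // => /(hJP _ (sr1 hA)). by case: hP => _ _ _ _ [].
Qed.
Lemma prime_restrict (K : fieldType) (W W' Q : K -> Prop) :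
  prime_ideal W Q -> incl W' W -> incl Q W' -> prime_ideal W' Q.
Proof. move=> [h1 h2 h3 h4 [h5 h6]] hW hQ; split => //.
  - by move=> t x ht hx; apply: h4 => //; apply: hW.
  - split => // a b ha hb; apply: h6; exact: hW. Qed.

Lemma mx_mono (K : fieldType) (W W' : K -> Prop) :
  incl W' W -> incl (mx W) W' -> incl (mx W) (mx W').
Proof. move=> h1 h2 x hx; split; first exact: h2.
  case: hx => _ [->|h]; [by left|right => h'; apply: h; exact: h1]. Qed.

Lemma chain_lift (K : fieldType) (T : K -> Prop) (c : nat -> (K -> Prop)) (n : nat) :
  is_subring T -> (forall i, (i <= n.+1)%N -> prime_ideal T (c i)) ->
  (forall i, (i <= n)%N -> strict_incl (c i) (c i.+1)) ->
  exists W, isval W /\ incl T W /\ ~ krull_dim_le W n.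
Proof.
  move=> hT hpr hst.
  have S : forall k, (k <= n.+1)%N -> exists W (q : nat -> (K -> Prop)),
     [/\ isval W, incl T W,
         (forall i, (i <= k)%N -> prime_ideal W (q i) /\ incl (q i) (mx W) /\
                                  (forall t, T t -> (q i t <-> c i t))),
         q k = mx W & (forall i, (i < k)%N -> incl (q i) (q i.+1))].
    elim=> [|k IH] hk.
    - have hc : ctx (fun _ => True) T (c 0%N).
        split => //.
        + split; first by split.
          by move=> x _; left.
        + exact: hpr.
        + move=> a _ [_ [->|]]; [by case: (hpr 0%N isT)|by []].
      have [W [hW hTW _ _ hWc]] := RC hc.
      exists W, (fun _ => mx W); split => //.
      move=> i hi; split; first exact: mx_prime_ideal. split => //.
      by move: hi; rewrite leqn0 => /eqP ->.
    - have [W [q [hW hTW hq hqk hqi]]] := IH (ltnW hk).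
      have hc : ctx W T (c k.+1).
        split => //.
        + exact: hpr.
        + move=> a ha hma. case: (hst k hk) => hs _; apply: hs.
          case: (hq k (leqnn _)) => _ [_ hh]; apply/hh => //; by rewrite hqk.
      have [W' [hW' hTW' hW'W hmW hW'c]] := RC hc.
      have hmm : incl (mx W) (mx W') by apply: mx_mono.
      exists W', (fun i => if i == k.+1 then mx W' else q i); split => //.
      + move=> i hi /=; have [->|hik] := eqVneq i k.+1; rewrite ?eqxx ?(negbTE hik).
        * split; first exact: mx_prime_ideal. split => //.
        * have hi' : (i <= k)%N by move: hi; rewrite leq_eqVlt (negbTE hik).
          case: (hq i hi') => hp [hin hTc]; split; last split => //.
          -- apply: prime_restrict hp hW'W _; move=> x hx; apply: hmW; exact: hin.
          -- move=> x hx; apply: hmm; exact: hin.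
      + by rewrite eqxx.
      + move=> i hi /=; have [hik|hik] := eqVneq i k.+1.
        * by move: hi; rewrite hik ltnn.
        * have [hik'|hik'] := eqVneq i.+1 k.+1.
          -- move: hik' => [->]; rewrite hqk; exact: hmm.
          -- apply: hqi; move: hi; rewrite ltnS leq_eqVlt => /orP [/eqP h|//].
             by move: hik'; rewrite h eqxx.
  have [W [q [hW hTW hq _ hqi]]] := S n.+1 (leqnn _).
  exists W; split => //; split => //.
  move=> H; apply: H; exists q; split.
  - by move=> i hi; case: (hq i hi).
  - move=> i hi; split; first by apply: hqi.
    case: (hst i hi) => _ [x [hx hnx]].
    have xT : T x by case: (hpr i.+1 hi) => h _ _ _ _; apply: h.
    exists x; split.
    + by case: (hq i.+1 hi) => _ [_ h]; apply/(h x xT).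
    + by case: (hq i (leqW hi)) => _ [_ h]; move/(h x xT).
Qed.
Lemma sub_nz (K : fieldType) (D : K -> Prop) : is_subring D -> nz_submodule D D.
Proof. move=> h; split; last by exists 1; split; [exact: sr1|exact: oner_neq0].
  split; [exact: sr0| move=> x y; exact: srD| move=> d x; exact: srM]. Qed.

Lemma span_sub (K : fieldType) (D : K -> Prop) s : is_subring D -> is_submodule D (Defs.span D s).
Proof. move=> h; split.
  - exists (fun _ => 0); split; first by move=> _; exact: sr0.
    by rewrite big1 // => i _; rewrite mul0r.
  - move=> x y [c [hc ->]] [c' [hc' ->]]; exists (fun i => c i + c' i); split.
    + by move=> i; apply: srD.
    + by rewrite -big_split; apply: eq_bigr => i _; rewrite mulrDl.
  - move=> d x hd [c [hc ->]]; exists (fun i => d * c i); split.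
    + by move=> i; apply: srM.
    + by rewrite mulr_sumr; apply: eq_bigr => i _; rewrite mulrA. Qed.

Lemma span_in (K : fieldType) (D E : K -> Prop) s : is_submodule D E ->
  (forall i, (i < size s)%N -> E s`_i) -> incl (Defs.span D s) E.
Proof. move=> [h0 hD hM] hs x [c [hc ->]]; apply: (big_ind E) => // i _.
  apply: hM => //; exact: hs. Qed.

Lemma span_mem (K : fieldType) (D : K -> Prop) s i : is_subring D -> (i < size s)%N ->
  Defs.span D s s`_i.
Proof. move=> h hi; exists (fun j => if j == i then 1 else 0); split.
  - by move=> j; case: (j == i); [exact: sr1|exact: sr0].
  - rewrite (bigD1 (Ordinal hi)) //= eqxx mul1r big1 ?addr0 // => j hj.
    have -> : (nat_of_ord j == i) = false.
      by apply/negbTE; apply: contra hj => /eqP hj'; apply/eqP; apply: val_inj.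
    by rewrite mul0r. Qed.

Lemma span_cat (K : fieldType) (D : K -> Prop) s t : is_subring D ->
  incl (Defs.span D s) (Defs.span D (s ++ t)) /\ incl (Defs.span D t) (Defs.span D (s ++ t)).
Proof. move=> h; split; apply: span_in; try exact: span_sub.
  - move=> i hi; have -> : s`_i = (s ++ t)`_i by rewrite nth_cat hi.
    by apply: span_mem => //; rewrite size_cat ltn_addr.
  - move=> i hi; have -> : t`_i = (s ++ t)`_(size s + i) by rewrite nth_cat ltnNge leq_addr /= addKn.
    by apply: span_mem => //; rewrite size_cat ltn_add2l. Qed.

Lemma fg_join (K : fieldType) (D M G1 G2 : K -> Prop) : is_subring D -> is_submodule D M ->
  fg_frac D G1 -> fg_frac D G2 -> incl G1 M -> incl G2 M ->
  exists H, [/\ fg_frac D H, incl H M, incl G1 H & incl G2 H].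
Proof. move=> hD hM [[_ [x [hx x0]]] [s e1]] [_ [t e2]] h1 h2; subst G1 G2.
  have [c1 c2] := span_cat s t hD.
  exists (Defs.span D (s ++ t)); split => //.
  - split; last by exists (s ++ t). split; first exact: span_sub.
    by exists x; split => //; apply: c1.
  - apply: span_in => // i; rewrite size_cat nth_cat => hi.
    case: ifP => hs.
    + by apply: h1; apply: span_mem.
    + apply: h2; apply: span_mem => //; rewrite -(ltn_add2l (size s)) subnKC //.
      by rewrite leqNgt hs.
Qed.
Lemma star_one (K : fieldType) (D : K -> Prop) star G : is_subring D -> semistar D star ->
  nz_submodule D G -> incl G D -> star G 1 -> star G = star D.
Proof. move=> hD [s1 s2 s3 s4 s5] hG hGD h1.
  have hDn := sub_nz hD.
  apply: setE => x; split; first by apply: s3.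
  have hsG := s1 _ hG.
  have hDs : incl D (star G).
    by move=> d hd; rewrite -[d]mulr1; case: hsG => [[_ _ hM] _]; apply: hM.
  move=> hx; rewrite -(s5 _ hG); exact: (s3 _ _ hDn hsG hDs).
Qed.

Lemma seq_in_chain (K : fieldType) (C : (K -> Prop) -> Prop) (s : seq K) :
  (exists X, C X) -> chainP C -> (forall i, (i < size s)%N -> bigU C s`_i) ->
  exists X, C X /\ forall i, (i < size s)%N -> X s`_i.
Proof. move=> [X0 hX0] hch; elim: s => [|x s IH] hs.
  - by exists X0; split.
  - have [X [hX hXs]] : exists X, C X /\ forall i, (i < size s)%N -> X s`_i.
      by apply: IH => i hi; apply: (hs i.+1).
    case: (hs 0%N isT) => X1 [hX1 hx].
    case: (hch _ _ hX hX1) => h.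
    + exists X1; split => // -[|i] hi //=; apply: h; exact: hXs.
    + exists X; split => // -[|i] hi //=; [exact: h|exact: hXs].
Qed.

Definition Fm (K : fieldType) (D : K -> Prop) star (P I : K -> Prop) :=
  [/\ nz_ideal D I, incl P I & ~ star_f D star I 1].

Lemma Fm_chain (K : fieldType) (D : K -> Prop) star (P : K -> Prop) C : is_subring D ->
  (exists X, C X) -> (forall X, C X -> Fm D star P X) -> chainP C -> Fm D star P (bigU C).
Proof. move=> hD hne hC hch; have [X0 hX0] := hne.
  have two : forall x y, bigU C x -> bigU C y -> exists X, C X /\ X x /\ X y.
    move=> x y [X [hX hx]] [Y [hY hy]]; case: (hch _ _ hX hY) => h.
    - by exists Y; split => //; split => //; apply: h.
    - by exists X; split => //; split => //; apply: h.
  case: (hC _ hX0) => [[[[h00 _ _] [x0 [hx0 nx0]]] _] hP0 _]; split.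
  - split; last by move=> x [X [hX hx]]; case: (hC _ hX) => [[_ h] _ _]; apply: h.
    split; last by exists x0; split => //; exists X0.
    split.
    + by exists X0.
    + move=> x y hx hy; case: (two _ _ hx hy) => X [hX [h1 h2]]; exists X; split => //.
      by case: (hC _ hX) => [[[[_ h _] _] _] _ _]; apply: h.
    + move=> d x hd [X [hX hx]]; exists X; split => //.
      by case: (hC _ hX) => [[[[_ _ h] _] _] _ _]; apply: h.
  - by move=> x hx; exists X0; split => //; apply: hP0.
  - move=> [G [hG hGU hG1]].
    have [[_ _] [s es]] := hG.
    have [X [hX hXs]] := seq_in_chain hne hch (s := s)
        (fun i hi => hGU _ (eq_ind_r (fun G => G s`_i) (span_mem (s := s) hD hi) es)).
    case: (hC _ hX) => [[[hXm _] _] _ hn]; apply: hn; exists G; split => //.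
    rewrite es; exact: span_in.
Qed.
Lemma fg_single (K : fieldType) (D M : K -> Prop) y : is_subring D -> is_submodule D M ->
  M y -> y != 0 -> [/\ fg_frac D (Defs.span D [:: y]), incl (Defs.span D [:: y]) M &
                        Defs.span D [:: y] y].
Proof. move=> hD hM hy y0.
  have hy' : Defs.span D [:: y] y by apply: (span_mem (s := [:: y]) (i := 0%N) hD).
  split => //.
  - split; last by exists [:: y]. split; [exact: span_sub|by exists y].
  - apply: span_in => // -[|i] //. Qed.

Lemma star_sub (K : fieldType) (D : K -> Prop) star G : semistar D star -> nz_submodule D G ->
  is_submodule D (star G).
Proof. by move=> [s1 _ _ _ _] hG; case: (s1 _ hG). Qed.

Lemma gather (K : fieldType) (D : K -> Prop) star (M : K -> Prop) x0 s :
  is_subring D -> semistar D star -> is_submodule D M -> M x0 -> x0 != 0 ->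
  (forall i, (i < size s)%N -> star_f D star M s`_i) ->
  exists H, [/\ fg_frac D H, incl H M & forall i, (i < size s)%N -> star H s`_i].
Proof. move=> hD hs hM hx0 nx0; elim: s => [|x s IH] H.
  - have [h1 h2 _] := fg_single hD hM hx0 nx0. by exists (Defs.span D [:: x0]); split.
  - have [H1 [hH1 hH1M hH1s]] : exists H, [/\ fg_frac D H, incl H M &
          forall i, (i < size s)%N -> star H s`_i] by apply: IH => i hi; apply: (H i.+1).
    case: (H 0%N isT) => G [hG hGM hGx].
    have [H2 [hH2 hH2M hGH hH1H]] := fg_join hD hM hG hH1 hGM hH1M.
    exists H2; split => // -[|i] hi /=.
    + case: hs => _ _ s3 _ _; apply: (s3 G H2) => //; [by case: hG|by case: hH2].
    + case: hs => _ _ s3 _ _; apply: (s3 H1 H2); [by case: hH1|by case: hH2|by []|exact: hH1s].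
Qed.

Lemma qmax_exists (K : fieldType) (D : K -> Prop) star (P : K -> Prop) :
  is_subring D -> semistar D star -> Fm D star P P -> exists M, QMax D star M /\ incl P M.
Proof. move=> hD hs hP.
  have [M [hFM hmax]] := zorn (ex_intro _ P hP) (fun C hne hC hch => Fm_chain hD hne hC hch).
  have hFM' := hFM; case: hFM' => [[[hMs [x0 [hx0 nx0]]] hMD] hPM hn1].
  have hss := hs; case: hss => s1 s2 s3 s4 s5.
  have back : forall x, M x -> star_f D star M x.
    move=> x hx; have [->|x0'] := eqVneq x 0.
    - have [h1 h2 h3] := fg_single hD hMs hx0 nx0; exists (Defs.span D [:: x0]); split => //.
      case: (star_sub hs (proj1 h1)) => h0 _ _; exact: h0.
    - have [h1 h2 h3] := fg_single hD hMs hx x0'; exists (Defs.span D [:: x]); split => //.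
      by apply: s4 => //; case: h1.
  have quasi : forall x, star_f D star M x /\ D x <-> M x.
    move=> x; split; last by move=> hx; split; [exact: back|exact: hMD].
    have hF' : Fm D star P (fun y => star_f D star M y /\ D y).
      split; [split; [split|]|..].
      - split.
        + split; [apply: back; by case: hMs|exact: sr0].
        + move=> a b [[G1 [hG1 hG1M ha]] hDa] [[G2 [hG2 hG2M hb]] hDb]; split; last exact: srD.
          have [H [hH hHM h1 h2]] := fg_join hD hMs hG1 hG2 hG1M hG2M.
          exists H; split => //. case: (star_sub hs (proj1 hH)) => _ hadd _; apply: hadd.
          * by apply: (s3 G1 H) => //; [case: hG1|case: hH].
          * by apply: (s3 G2 H) => //; [case: hG2|case: hH].
        + move=> d a hd [[G [hG hGM ha]] hDa]; split; last exact: srM.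
          exists G; split => //; case: (star_sub hs (proj1 hG)) => _ _ hm; exact: hm.
      - by exists x0; split => //; split; [exact: back|exact: hMD].
      - by move=> y [].
      - by move=> y hy; split; [apply: back; apply: hPM|apply: hMD; apply: hPM].
      - move=> [G [hG hGM' hG1]].
        have [hGn [s es]] := hG.
        have [H [hH hHM hHs]] := gather hD hs hMs hx0 nx0
           (fun i hi => proj1 (hGM' _ (eq_ind_r (fun G => G s`_i) (span_mem (s := s) hD hi) es))).
        apply: hn1; exists H; split => //.
        have hsH : nz_submodule D (star H) by apply: s1; case: hH.
        have hGsH : incl G (star H) by rewrite es; apply: span_in => //; case: hsH.
        rewrite -(s5 H) //; last by case: hH.
        exact: (s3 G (star H) hGn hsH hGsH 1 hG1).
    by move=> hx; apply: (hmax _ hF') => // y hy; split; [exact: back|exact: hMD].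
  exists M; split => //; split.
  - split; [split; [|exact: quasi]|].
    + by case: hFM.
    + exists 1; split; first exact: sr1. move=> hM1; apply: hn1.
      by case: (quasi 1) => _ h; case: (h hM1).
  - move=> J [[hJ hJq] [y [hy hny]]] hMJ.
    have hFJ : Fm D star P J.
      split => //; first by move=> z hz; apply: hMJ; apply: hPM.
      move=> hJ1; apply: hny; rewrite -[y]mulr1.
      case: hJ => [[[_ _ hm] _] _]; apply: hm => //; by case: (hJq 1) => h _; apply: h; split => //; exact: sr1.
    apply: setE => z; split; [exact: (hmax J hFJ hMJ)| exact: hMJ].
Qed.
Lemma linked_tilde (K : fieldType) (D : K -> Prop) star (W : K -> Prop) :
  is_subring D -> is_quotient_field_of D -> semistar D star -> isval W -> incl D W ->
  (forall F, fg_frac D F -> incl F D -> star F = star D -> prodmod F W = W) ->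
  forall F, fg_frac D F -> incl (tilde D star F) (prodmod F W).
Proof. move=> hD hq hs hW hDW hlink F hF.
  have hWs := proj1 hW.
  have [_ [f0 [hf0 nf0]]] := proj1 hF.
  case: (classic (forall x, W x)) => [hall|].
    move=> y _; rewrite -[y](mulrK (x := f0)) ?unitfE // [y * _]mulrC -mulrA.
    by apply: pm_gen => //; apply: hall.
  move=> /not_all_ex_not [x hx].
  set P := fun d => D d /\ mx W d.
  have hFP : Fm D star P P.
    split => //; last first.
    - move=> [G [hG hGP hG1]].
      have hGD : incl G D by move=> z /hGP [].
      have e := star_one hD hs (proj1 hG) hGD hG1.
      have := hlink G hG hGD e; move/(f_equal (fun S => S 1)).
      have h1 : W 1 by apply: sr1.
      move=> e1; rewrite -e1 in h1; apply: (mx1 hWs).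
      move: h1; apply: (pm_in (Z := mx W)); [exact: mx0 | move=> a b; exact: mxD |].
      by move=> a b ha hb; apply: mxMr => //; case: (hGP _ ha).
    split; last by move=> z [].
    split.
    - split.
      + by split; [exact: sr0|exact: mx0].
      + by move=> a b [ha ha'] [hb hb']; split; [exact: srD|exact: mxD].
      + by move=> d a hd [ha ha']; split; [exact: srM|apply: mxM => //; apply: hDW].
    - have x0 : x != 0 by apply/eqP => x0; apply: hx; rewrite x0; exact: sr0.
      have [a [b [ha hb b0 ex]]] := hq x.
      have a0 : a != 0 by apply/eqP => a0; move: x0; rewrite ex a0 mul0r eqxx.
      exists b; split => //; split => //.
      have -> : b = a * x^-1 by rewrite ex invfM invrK mulVKf.
      apply: mxM => //; [exact: hDW|exact: val_notin].
  have [M [hM hPM]] := qmax_exists hD hs hFP.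
  move=> y hy; have [e [s [he hsD hsM ->]]] := hy M hM.
  have hns : ~ mx W s by move=> h; apply: hsM; apply: hPM.
  have [s0 hsi] := mx_unit (hDW _ hsD) hns.
  exact: pm_gen.
Qed.

Theorem lemma4p1 (K : fieldType) (D : K -> Prop)
  (star : (K -> Prop) -> (K -> Prop)) (n : nat) :
  is_subring D -> is_quotient_field_of D -> semistar D star ->
  ((forall T, linked_overring D star T -> krull_dim_le T n) <->
   (forall V, tilde_valuation_overring D star V -> krull_dim_le V n)).
Proof.
  move=> hD hq hs; have hss := hs; case: hss => s1 s2 s3 s4 s5; split.
  - move=> H1 V [[[hVs hDV] hVv] hVt]; apply: H1; split; first by split.
    move=> F hF hFD e.
    apply: pm_one => //; first by move=> z /hFD; apply: hDV.
    apply: hVt => // M [[[hMn hMq] [x [hx hnx]]] _].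
    case: (classic (exists f, F f /\ ~ M f)) => [[f [hf hnf]]|hno].
    + have f0 : f != 0 by apply/eqP => f0; apply: hnf; rewrite f0; case: hMn => [[[h0 _ _] _] _].
      exists f, f; split => //; [exact: hFD|by rewrite mulfV].
    + exfalso; apply: hnx.
      have hFM : incl F M by move=> z hz; apply: NNPP => h; apply: hno; exists z.
      have hM1 : M 1.
        case: (hMq 1) => h _; apply: h; split; last exact: sr1.
        exists F; split => //; rewrite e; apply: s4; [exact: sub_nz|exact: sr1].
      rewrite -[x]mulr1; case: hMn => [[[_ _ hm] _] _]; exact: hm.
  - move=> H2 T [[hTs hDT] hTl] [c [hc1 hc2]].
    have [W [hW [hTW hnk]]] := chain_lift hTs hc1 hc2.
    apply: hnk; apply: H2; split.
    + split; [split => //; [exact: (proj1 hW)|by move=> z /hDT /hTW]|exact: (proj2 hW)].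
    + apply: (linked_tilde hD hq hs hW); first by move=> z /hDT /hTW.
      move=> F hF hFD e; apply: pm_one; [exact: (proj1 hW)|by move=> z /hFD /hDT /hTW|].
      have : prodmod F T 1 by rewrite (hTl F hF hFD e); exact: sr1.
      by apply: pm_mono => // z; apply: hTW.
Qed.
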